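(* For all $n$, $\mathrm{Sort}_n(132,321)=\mathrm{Av}_n(123,132^{\star})$.
   Context: $\mathrm{Av}_n(123,132^{\star})$ is the set of $x\in S_n$ that avoid the classical pattern $123$ (no subsequence order-isomorphic to $123$) and the bivincular pattern $132^{\star}$, where an occurrence of $132^{\star}$ in $x=x_1\cdots x_n$ is a pair of indices $a<b<n$ with $x_a<x_{b+1}$ and $x_b=x_{b+1}+1$. For a set $T$ of patterns, the map $s_T$ is defined as follows: the entries of the input permutation are read from left to right, with an initially empty stack. At each step, if the input is nonempty and pushing the next input entry onto the stack produces a stack whose contents, read from top to bottom, avoid every pattern in $T$, that entry is pushed; otherwise the top entry of the stack is popped and appended to the output. When the input is exhausted, the remaining stack entries are popped one at a time to the output. Write $s_{\sigma,\tau}=s_{\{\sigma,\tau\}}$ and $s=s_{\{21\}}$ (West's stack-sorting map). $\mathrm{Sort}_n(\sigma,\tau)$ is the set of $x\in S_n$ with $s(s_{\sigma,\tau}(x))=12\cdots n$. *)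

(* Defs.v *)
(* Permutations of size n are sequences of naturals that are
   rearrangements of 1..n. *)
From mathcomp Require Import all_boot.
Set Implicit Arguments. Unset Strict Implicit. Unset Printing Implicit Defensive.

Definition is_perm (n : nat) (x : seq nat) : bool := perm_eq x (iota 1 n).

Fixpoint subseqs (s : seq nat) : seq (seq nat) :=
  if s is a :: s' then [seq a :: t | t <- subseqs s'] ++ subseqs s' else [:: [::]].

Definition order_iso (t p : seq nat) : bool :=
  (size t == size p) &&
  all (fun i => all (fun j =>
     (nth 0 t i < nth 0 t j) == (nth 0 p i < nth 0 p j)) (iota 0 (size p)))
      (iota 0 (size p)).

Definition contains (s p : seq nat) : bool := has (order_iso ^~ p) (subseqs s).

Definition avoids (s p : seq nat) : bool := ~~ contains s p.

Definition avoids_all (T : seq (seq nat)) (s : seq nat) : bool :=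
  all (avoids s) T.

(* The stack is a list whose head is
   the top, so the stack read from top to bottom is the list itself.
   Each step consumes an input entry or a stack entry, so fuel 2*|input|
   suffices.  (The branch "push forbidden but stack empty" cannot occur for
   sets of patterns of length >= 2; there we push anyway.) *)
Fixpoint stack_run (T : seq (seq nat)) (fuel : nat) (inp stk out : seq nat)
  : seq nat :=
  match fuel with
  | 0 => out ++ stk
  | f.+1 =>
    match inp with
    | [::] => out ++ stk
    | a :: inp' =>
      if avoids_all T (a :: stk) then stack_run T f inp' (a :: stk) out
      else match stk with
           | [::] => stack_run T f inp' [:: a] out
           | b :: stk' => stack_run T f inp stk' (rcons out b)
           end
    end
  end.

Definition sT (T : seq (seq nat)) (x : seq nat) : seq nat :=
  stack_run T (2 * size x) x [::] [::].

Definition west (x : seq nat) : seq nat := sT [:: [:: 2; 1]] x.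

Definition in_Sort_132_321 (n : nat) (x : seq nat) : bool :=
  is_perm n x && (west (sT [:: [:: 1; 3; 2]; [:: 3; 2; 1]] x) == iota 1 n).

(* occurrence of the bivincular pattern 132star: indices a < b < n (1-based)
   with x_a < x_{b+1} and x_b = x_{b+1} + 1; here 0-based. *)
Definition contains_132star (x : seq nat) : bool :=
  has (fun b => has (fun a =>
         (nth 0 x a < nth 0 x b.+1) && (nth 0 x b == (nth 0 x b.+1).+1))
       (iota 0 b))
    (iota 0 (size x).-1).

Definition in_Av_123_132star (n : nat) (x : seq nat) : bool :=
  [&& is_perm n x, avoids x [:: 1; 2; 3] & ~~ contains_132star x].

(* Main.v *)
Require Import Defs.
From mathcomp Require Import all_boot zify.
Set Implicit Arguments. Unset Strict Implicit. Unset Printing Implicit Defensive.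

Lemma nil_subseqs s : [::] \in subseqs s.
Proof. elim: s => [|a s IH] //=; by rewrite mem_cat IH orbT. Qed.

Lemma mem_subseqs s t : (t \in subseqs s) = subseq t s.
Proof.
elim: s t => [|a s IH] t /=.
  by case: t.
rewrite mem_cat IH; case: t => [|x t] /=.
  by rewrite sub0seq orbT.
case: eqP => [->|ne].
  have inj : injective (cons a) by move=> ? ? [].
  rewrite (mem_map inj) IH.
  by apply/orP/idP => [[//|/cons_subseq //]|->]; left.
apply/orP/idP => [[/mapP [t' _ [e _]]|//]|->]; [by case: ne | by right].
Qed.

Lemma containsP s p : reflect (exists t, subseq t s /\ order_iso t p) (contains s p).
Proof.
apply: (iffP hasP) => [[t]|[t [h1 h2]]]; rewrite ?mem_subseqs; first by exists t.
by exists t; rewrite ?mem_subseqs.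
Qed.

Lemma iso_size t p : order_iso t p -> size t = size p.
Proof. by case/andP => /eqP. Qed.

Lemma contains3 s p : size p = 3 ->
  contains s p <-> exists u v w, subseq [:: u; v; w] s /\ order_iso [:: u; v; w] p.
Proof.
move=> sp; split.
  case/containsP => t [h1 h2]; move: (iso_size h2); rewrite sp.
  case: t h1 h2 => [|u [|v [|w [|]]]] //= h1 h2 _; by exists u, v, w.
case=> u [v [w [h1 h2]]]; apply/containsP; by exists [:: u; v; w].
Qed.

Lemma contains2 s p : size p = 2 ->
  contains s p <-> exists u v, subseq [:: u; v] s /\ order_iso [:: u; v] p.
Proof.
move=> sp; split.
  case/containsP => t [h1 h2]; move: (iso_size h2); rewrite sp.
  case: t h1 h2 => [|u [|v [|]]] //= h1 h2 _; by exists u, v.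
case=> u [v [h1 h2]]; apply/containsP; by exists [:: u; v].
Qed.

Ltac isotac := rewrite /order_iso /=;
  case: (ltngtP _ _); case: (ltngtP _ _); case: (ltngtP _ _); move=> *; rewrite ?ltnn //=; lia.

Lemma iso231 u v w : order_iso [:: u; v; w] [:: 2; 3; 1] = (w < u < v).
Proof. isotac. Qed.
Lemma iso123 u v w : order_iso [:: u; v; w] [:: 1; 2; 3] = (u < v < w).
Proof. isotac. Qed.
Lemma iso132 u v w : order_iso [:: u; v; w] [:: 1; 3; 2] = (u < w < v).
Proof. isotac. Qed.
Lemma iso321 u v w : order_iso [:: u; v; w] [:: 3; 2; 1] = (w < v < u).
Proof. isotac. Qed.
Lemma iso21 u v : order_iso [:: u; v] [:: 2; 1] = (v < u).
Proof. rewrite /order_iso /=; case: (ltngtP u v); move=> *; rewrite ?ltnn //=; lia. Qed.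

Definition has231 s := exists u v w, subseq [:: u; v; w] s /\ w < u < v.
Definition has123 s := exists u v w, subseq [:: u; v; w] s /\ u < v < w.
Definition has132 s := exists u v w, subseq [:: u; v; w] s /\ u < w < v.
Definition has321 s := exists u v w, subseq [:: u; v; w] s /\ w < v < u.
Definition has21 s := exists u v, subseq [:: u; v] s /\ v < u.

Lemma c231 s : contains s [:: 2; 3; 1] <-> has231 s.
Proof. rewrite contains3 //; split; case=> u [v [w [h1 h2]]]; exists u, v, w; by rewrite iso231 in h2 *. Qed.
Lemma c123 s : contains s [:: 1; 2; 3] <-> has123 s.
Proof. rewrite contains3 //; split; case=> u [v [w [h1 h2]]]; exists u, v, w; by rewrite iso123 in h2 *. Qed.
Lemma c132 s : contains s [:: 1; 3; 2] <-> has132 s.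
Proof. rewrite contains3 //; split; case=> u [v [w [h1 h2]]]; exists u, v, w; by rewrite iso132 in h2 *. Qed.
Lemma c321 s : contains s [:: 3; 2; 1] <-> has321 s.
Proof. rewrite contains3 //; split; case=> u [v [w [h1 h2]]]; exists u, v, w; by rewrite iso321 in h2 *. Qed.
Lemma c21 s : contains s [:: 2; 1] <-> has21 s.
Proof. rewrite contains2 //; split; case=> u [v [h1 h2]]; exists u, v; by rewrite iso21 in h2 *. Qed.
Fixpoint feed (T : seq (seq nat)) (a : nat) (stk out : seq nat) {struct stk}
  : seq nat * seq nat :=
  if avoids_all T (a :: stk) then (a :: stk, out)
  else match stk with
       | [::] => ([:: a], out)
       | b :: stk' => feed T a stk' (rcons out b)
       end.

Fixpoint runF T (inp stk out : seq nat) : seq nat :=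
  match inp with
  | [::] => out ++ stk
  | a :: inp' => runF T inp' (feed T a stk out).1 (feed T a stk out).2
  end.

Definition step T (st : seq nat * seq nat) a := feed T a st.1 st.2.
Definition res (st : seq nat * seq nat) := st.2 ++ st.1.

Lemma runF_foldl T inp stk out :
  runF T inp stk out = res (foldl (step T) (stk, out) inp).
Proof. elim: inp stk out => [|a inp IH] stk out /=; first by rewrite /res. rewrite IH /step /=; by case: (feed T a stk out). Qed.

Lemma stack_run_runF T f inp stk out :
  2 * size inp + size stk <= f -> stack_run T f inp stk out = runF T inp stk out.
Proof.
elim: f inp stk out => [|f IH] [|a inp] stk out //=.
move=> h; case: stk h => [|b stk] h /=; case E: (avoids_all T _); rewrite IH //=; move: h => /= h; lia.

Qed.

Lemma sT_res T x : sT T x = res (foldl (step T) ([::], [::]) x).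
Proof. by rewrite /sT stack_run_runF ?runF_foldl //= addn0. Qed.

Lemma feed_spec T a stk out : exists j,
  feed T a stk out = (a :: drop j stk, out ++ take j stk) /\
  (avoids_all T (a :: drop j stk) \/ drop j stk = [::]).
Proof.
elim: stk out => [|b stk IH] out /=.
  exists 0; rewrite cats0; case: ifP => h; split => //; by [left | right].
case: ifP => h.
  exists 0; rewrite drop0 take0 cats0; split => //; by left.
case: (IH (rcons out b)) => j [-> h2]; exists j.+1; by rewrite /= cat_rcons.
Qed.

Lemma feed_bottom T a s Z out : avoids_all T (a :: Z) -> exists j,
  feed T a (s ++ Z) out = (a :: (drop j s ++ Z), out ++ take j s).
Proof.
move=> hZ; elim: s out => [|b s IH] out /=.
  exists 0; case: Z hZ => [|z Z] /= hZ; by rewrite hZ cats0.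
case: ifP => h.
  exists 0; by rewrite drop0 take0 cats0.
case: (IH (rcons out b)) => j ->; exists j.+1; by rewrite /= cat_rcons.
Qed.

Lemma res_step_perm T st a : perm_eq (res (step T st a)) (res st ++ [:: a]).
Proof.
case: st => stk out; rewrite /step /res /=.
case: (feed_spec T a stk out) => j [-> _] /=.
rewrite -!catA perm_cat2l.
have -> : stk ++ [:: a] = take j stk ++ drop j stk ++ [:: a] by rewrite catA cat_take_drop.
by rewrite perm_cat2l -cat1s perm_catC.
Qed.

Lemma res_perm T st p : perm_eq (res (foldl (step T) st p)) (res st ++ p).
Proof.
elim: p st => [|a p IH] st /=; first by rewrite cats0.
apply: perm_trans (IH _) _.
by rewrite -cat1s catA perm_cat2r res_step_perm.
Qed.

Lemma res_step_subseq T st a : subseq (res st) (res (step T st a)).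
Proof.
case: st => stk out; rewrite /step /res /=.
case: (feed_spec T a stk out) => j [-> _] /=.
rewrite -{1}(cat_take_drop j stk) -!catA !subseq_cat2l.
rewrite -cat1s; exact: suffix_subseq.
Qed.

Lemma res_subseq T st p : subseq (res st) (res (foldl (step T) st p)).
Proof.
elim: p st => [|a p IH] st /=; first exact: subseq_refl.
exact: subseq_trans (res_step_subseq _ _ _) (IH _).
Qed.

Lemma res_prefix T st p : exists r, res (foldl (step T) st p) = st.2 ++ r.
Proof.
elim: p st => [|a p IH] st /=; first by exists st.1.
case: (IH (step T st a)) => r ->.
case: st => stk out; rewrite /step /=.
case: (feed_spec T a stk out) => j [-> _] /=.
exists (take j stk ++ r); by rewrite catA.
Qed.

Lemma stk_last T st a : exists D, (step T st a).1 = a :: D /\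
   (avoids_all T (a :: D) \/ D = [::]) /\ {subset D <= st.1}.
Proof.
case: st => stk out; rewrite /step /=.
case: (feed_spec T a stk out) => j [-> h] /=; exists (drop j stk); split => //; split => //.
exact: mem_subseq (drop_subseq _ _).
Qed.

Lemma bottom_keep T Z : (forall a, avoids_all T (a :: Z)) ->
  forall p st s, st.1 = s ++ Z -> exists s', (foldl (step T) st p).1 = s' ++ Z.
Proof.
move=> hZ; elim=> [|a p IH] st s e /=; first by exists s.
case: st e => stk out /= ->.
case: (feed_bottom s out (hZ a)) => j E.
apply: (IH _ (a :: drop j s)); by rewrite /step /= E.
Qed.

Lemma sorted_catR (r : rel nat) (s1 s2 : seq nat) : transitive r ->
  sorted r s1 -> sorted r s2 -> (forall u z, u \in s1 -> z \in s2 -> r u z) ->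
  sorted r (s1 ++ s2).
Proof.
move=> tr h1 h2 h3; rewrite !(sorted_pairwise tr) in h1 h2 *.
rewrite pairwise_cat h1 h2 !andbT; apply/allrelP => u z; exact: h3.
Qed.

Lemma sorted_rconsR (r : rel nat) (s : seq nat) b : transitive r ->
  sorted r s -> (forall u, u \in s -> r u b) -> sorted r (rcons s b).
Proof.
move=> tr h1 h2; rewrite -cats1; apply: sorted_catR => // u z uin; rewrite inE => /eqP ->.
exact: h2.
Qed.

Lemma sorted_head (b : nat) s z : sorted ltn (b :: s) -> z \in s -> b < z.
Proof. move=> /(order_path_min ltn_trans) /allP; apply. Qed.

Lemma subseq_sorted2 (r : rel nat) (u v : nat) (s : seq nat) : transitive r -> sorted r s -> subseq [:: u; v] s -> r u v.
Proof. move=> tr hs hsub; have := subseq_sorted tr hsub hs; by rewrite /= andbT. Qed.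

Lemma subseq_split (a : nat) (t s : seq nat) : subseq (a :: t) s -> exists s1 s2, s = s1 ++ a :: s2 /\ subseq t s2.
Proof.
elim: s => [|b s IH] //=.
case: eqP => [-> h|ne h]; first by exists [::], s.
case: (IH h) => s1 [s2 [-> h2]]; by exists (b :: s1), s2.
Qed.

Lemma subseq_mid (s1 s2 t : seq nat) a : subseq t s2 -> subseq (a :: t) (s1 ++ a :: s2).
Proof.
move=> h; rewrite -[a :: t]cat0s; apply: cat_subseq; first exact: sub0seq.
by rewrite /= eqxx.
Qed.

Lemma subseq_consE (u a : nat) t s :
  subseq (u :: t) (a :: s) = if u == a then subseq t s else subseq (u :: t) s.
Proof. by rewrite /=; case: eqP. Qed.

Lemma has231_sub s t : has231 s -> subseq s t -> has231 t.
Proof. case=> u [v [w [h1 h2]]] h; exists u, v, w; split => //; exact: subseq_trans h1 h. Qed.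

Lemma has21_sub s t : has21 s -> subseq s t -> has21 t.
Proof. case=> u [v [h1 h2]] h; exists u, v; split => //; exact: subseq_trans h1 h. Qed.

Lemma sorted_no21 s : sorted ltn s -> ~ has21 s.
Proof. move=> hs [u [v [h1 h2]]]; have := subseq_sorted2 ltn_trans hs h1; lia. Qed.

Lemma no21_sorted s : uniq s -> ~ has21 s -> sorted ltn s.
Proof.
elim: s => [|a s IH] //= /andP [an us] h.
rewrite (path_sortedE ltn_trans) IH //; last first.
  move=> h2; apply: h; apply: has21_sub h2 _; exact: subseq_cons.
rewrite andbT; apply/allP => z zin.
have : ~~ (z < a).
  apply/negP => lt; apply: h; exists a, z; split => //.
  by rewrite /= eqxx sub1seq.
have : a != z by apply/eqP => e; move: an; rewrite e zin.
move=> /eqP ne; lia.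
Qed.

Definition T2 := [:: [:: 2; 1]].

Lemma avT2 s : avoids_all T2 s = ~~ contains s [:: 2; 1].
Proof. by rewrite /avoids_all /= andbT. Qed.

Lemma blockedW a b s : ~~ avoids_all T2 [:: a, b & s] -> sorted ltn (b :: s) -> b < a.
Proof.
rewrite avT2 negbK => /c21 [u [v [h1 h2]]] hs.
move: h1; rewrite subseq_consE; case: eqP => [eu|ne] h1.
  move: h1; rewrite sub1seq inE; case/orP => [/eqP ev|vin]; first lia.
  have := sorted_head hs vin; lia.
exfalso; apply: (sorted_no21 hs); by exists u, v.
Qed.

Definition InvW (inp stk out : seq nat) :=
  [/\ sorted ltn stk, sorted ltn out,
      (forall u z, u \in out -> z \in stk ++ inp -> u < z),
      ~ has231 (rev stk ++ inp) & uniq (out ++ stk ++ inp)].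

Lemma feedW a inp stk out : InvW (a :: inp) stk out ->
  InvW inp (feed T2 a stk out).1 (feed T2 a stk out).2.
Proof.
rewrite /InvW; elim: stk out => [|b s IH] out.
  have -> : feed T2 a [::] out = ([:: a], out) by rewrite /=; try case: ifP.
  case=> h1 h2 h3 h4 h5; split => //=.
move=> [h1 h2 h3 h4 h5] /=.
have hu : uniq (a :: b :: s).
  have -> : a :: b :: s = [:: a] ++ b :: s by [].
  rewrite uniq_catC; apply: subseq_uniq h5.
  rewrite -[_ ++ [:: a]]cat0s; apply: cat_subseq (sub0seq _) _.
  apply: cat_subseq (subseq_refl _) _; by rewrite sub1seq inE eqxx.
case: ifP => hav.
  split => //.
  - apply: no21_sorted => //; move=> h; move: hav; rewrite andbT => /negP; apply.
    by apply/c21.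
  - move=> u z uin zin; apply: h3 => //; move: zin; rewrite !inE !mem_cat !inE.
    by case/orP => [->|/orP [->|/orP [->|->]]]; rewrite ?orbT.
  - by rewrite rev_cons cat_rcons.
  - rewrite /= (perm_uniq (_ : perm_eq _ (out ++ (b :: s) ++ a :: inp))) //.
    by rewrite perm_cat2l -(cat1s a inp) perm_sym perm_catCA.
have {}hav : ~~ avoids_all T2 [:: a, b & s] by rewrite /avoids_all /= hav.
apply: IH; split.
- exact: path_sorted h1.
- apply: (sorted_rconsR ltn_trans) => // u uin; by apply: (h3 u b uin); rewrite mem_cat inE eqxx.
- move=> u z; rewrite mem_rcons inE; case/orP => [/eqP ->|uin] zin; last first.
    apply: h3 => //; by rewrite /= inE zin orbT.
  move: zin; rewrite mem_cat inE; case/orP => [zin|/orP [/eqP ->|zin]].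
  + exact: sorted_head h1 zin.
  + exact: blockedW hav h1.
  + have ba := blockedW hav h1.
    have nzb : ~~ (z < b).
      apply/negP => zb; apply: h4; exists b, a, z; split; last by rewrite zb ba.
      rewrite rev_cons cat_rcons; apply: cat_subseq (sub0seq _) _.
      by rewrite /= !eqxx sub1seq.
    have : b != z.
      apply/eqP => e; move: h5; rewrite cat_uniq => /and3P [_ _].
      by rewrite e /= mem_cat inE zin !orbT.
    move=> /eqP; lia.
- move=> hh; apply: h4; apply: has231_sub hh _.
  rewrite rev_cons cat_rcons; apply: cat_subseq (subseq_refl _) _.
  exact: subseq_cons.
- by rewrite cat_rcons.
Qed.

Lemma runW inp stk out : InvW inp stk out -> sorted ltn (runF T2 inp stk out).
Proof.
elim: inp stk out => [|a inp IH] stk out /=.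
  case=> h1 h2 h3 _ _; apply: (sorted_catR ltn_trans) => // u z uin zin; by apply: (h3 u z uin); rewrite cats0.
move=> h; apply: IH; exact: (feedW h).
Qed.

Lemma knuth1 y : uniq y -> ~ has231 y -> sorted ltn (sT T2 y).
Proof.
move=> uy hy; rewrite /sT stack_run_runF ?addn0 //; apply: runW; split => //.
Qed.

Lemma knuth2 y : uniq y -> has231 y -> ~ sorted ltn (sT T2 y).
Proof.
move=> uy [u [v [w [hs hw]]]].
case: (subseq_split hs) => s1 [r1 [ey hs1]].
case: (subseq_split hs1) => s2 [r2 [er1 hs2]].
move: hs2; rewrite sub1seq => win.
set P := rcons (s1 ++ u :: s2) v.
have yPQ : y = P ++ r2 by rewrite ey er1 /P cat_rcons -catA.
rewrite sT_res yPQ foldl_cat.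
set stP := foldl (step T2) ([::], [::]) P.
have hP : perm_eq (res stP) P by have := res_perm T2 ([::], [::]) P.
have uP : u \in res stP by rewrite (perm_mem hP) /P mem_rcons inE mem_cat inE eqxx !orbT.
have uout : u \in stP.2.
  move: uP; rewrite /res mem_cat; case/orP => // ust.
  have : stP = step T2 (foldl (step T2) ([::], [::]) (s1 ++ u :: s2)) v.
    by rewrite /stP /P -cats1 foldl_cat.
  move=> e; move: ust; rewrite e.
  case: (stk_last T2 (foldl (step T2) ([::], [::]) (s1 ++ u :: s2)) v) => D [-> [hD _]].
  rewrite inE; case/orP => [/eqP euv|uD]; first lia.
  case: hD => [hD|hD]; last by rewrite hD in uD.
  move: hD; rewrite avT2 => /negP; case; apply/c21; exists v, u; split; last lia.
  by rewrite /= eqxx sub1seq.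
have wnP : w \notin P.
  apply/negP => wP; move: uy; rewrite yPQ cat_uniq => /and3P [_ /negP h _]; apply: h.
  by apply/hasP; exists w.
case: (res_prefix T2 stP r2) => r er.
have wres : w \in res (foldl (step T2) stP r2).
  have := res_perm T2 stP r2; move/perm_mem => ->; by rewrite mem_cat win orbT.
have wr : w \in r.
  move: wres; rewrite er mem_cat; case/orP => // wo; exfalso; move/negP: wnP; apply.
  by rewrite -(perm_mem hP) /res mem_cat wo.
move=> hsort; have : subseq [:: u; w] (res (foldl (step T2) stP r2)).
  rewrite er -cat1s; apply: cat_subseq; by rewrite sub1seq.
move/(subseq_sorted2 ltn_trans hsort); lia.
Qed.

Definition T1 := [:: [:: 1; 3; 2]; [:: 3; 2; 1]].

Lemma avT1P s : avoids_all T1 s <-> ~ has132 s /\ ~ has321 s.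
Proof.
rewrite /avoids_all /= andbT /avoids; split.
  case/andP => /negP h1 /negP h2; split => h; [apply: h1 | apply: h2]; by [apply/c132 | apply/c321].
case=> h1 h2; apply/andP; split; apply/negP => h; [apply: h1 | apply: h2]; by [apply/c132 | apply/c321].
Qed.

Lemma subseq_behead (u a : nat) t s : subseq (u :: t) (a :: s) -> subseq t s.
Proof. rewrite subseq_consE; case: eqP => // _; exact: cons_subseq. Qed.

Lemma sorted_avT1 a Z : sorted ltn Z -> avoids_all T1 (a :: Z).
Proof.
move=> hZ; apply/avT1P; split => [[u [v [t [h1 h2]]]]|[u [v [t [h1 h2]]]]];
  have := subseq_sorted2 ltn_trans hZ (subseq_behead h1); lia.
Qed.

Lemma uniq_notboth (s1 s2 : seq nat) z : uniq (s1 ++ s2) -> z \in s1 -> z \in s2 -> False.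
Proof.
rewrite cat_uniq => /and3P [_ /negP h _] z1 z2; apply: h; apply/hasP; by exists z.
Qed.

Lemma first_sorted w R : uniq (w :: R) -> (forall z, z \in R -> w < z) ->
  (avoids_all T1 (w :: R) \/ R = [::]) -> sorted ltn R.
Proof.
move=> /andP [_ uR] hw [hav|->] //.
apply: no21_sorted => // [[v [t [h1 h2]]]].
case/avT1P: hav => h _; apply: h; exists w, v, t; split.
  by rewrite subseq_consE eqxx.
have tR : t \in R by apply: (mem_subseq h1); rewrite !inE eqxx orbT.
have := hw t tR; lia.
Qed.

Lemma min_split (l : seq nat) : l != [::] ->
  exists t1 w t2, l = t1 ++ w :: t2 /\ (forall z, z \in l -> w <= z).
Proof.
elim: l => [|a l IH] // _.
case: (altP (l =P [::])) => [->|ne].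
  exists [::], a, [::]; split => // z; rewrite inE => /eqP ->; lia.
case: (IH ne) => t1 [w [t2 [el hw]]].
case: (ltnP w a) => hwa.
  exists (a :: t1), w, t2; rewrite el; split => // z; rewrite inE; case/orP => [/eqP ->|]; first lia.
  rewrite -el; exact: hw.
exists [::], a, l; split => // z; rewrite inE; case/orP => [/eqP ->//|/hw]; lia.
Qed.

Definition st0 T p := foldl (step T) ([::], [::]) p.

Lemma res_st0_perm T p : perm_eq (res (st0 T p)) p.
Proof. exact: (res_perm T ([::], [::]) p). Qed.

Lemma stk_uniq T p : uniq p -> uniq (st0 T p).1.
Proof.
move=> up; have : uniq (res (st0 T p)) by rewrite (perm_uniq (res_st0_perm T p)).
by rewrite /res cat_uniq => /and3P [].
Qed.

Lemma stk_sub T p z : z \in (st0 T p).1 -> z \in p.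
Proof. move=> h; rewrite -(perm_mem (res_st0_perm T p)) /res mem_cat h orbT //. Qed.

Lemma out_sub T p z : z \in (st0 T p).2 -> z \in p.
Proof. move=> h; rewrite -(perm_mem (res_st0_perm T p)) /res mem_cat h //. Qed.

Lemma st0_rcons T p a : st0 T (rcons p a) = step T (st0 T p) a.
Proof. by rewrite /st0 -cats1 foldl_cat. Qed.

Lemma st0_cat T p q : st0 T (p ++ q) = foldl (step T) (st0 T p) q.
Proof. by rewrite /st0 foldl_cat. Qed.

Lemma setup t1 w rest : uniq (t1 ++ w :: rest) -> (forall z, z \in t1 -> w < z) ->
  exists R, [/\ (st0 T1 (rcons t1 w)).1 = w :: R, {subset R <= t1} &
    forall q, exists s', (st0 T1 (rcons t1 w ++ q)).1 = s' ++ w :: R].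
Proof.
move=> ux hw.
case: (stk_last T1 (st0 T1 t1) w) => D [eD [hD sD]].
have sD' : {subset D <= t1} by move=> z /sD; exact: stk_sub.
have uw : uniq (w :: D).
  rewrite -eD -st0_rcons; apply: stk_uniq; apply: subseq_uniq ux.
  by rewrite -cats1; apply: cat_subseq (subseq_refl _) _; rewrite sub1seq inE eqxx.
have sorted_wD : sorted ltn (w :: D).
  rewrite /= (path_sortedE ltn_trans); apply/andP; split.
    apply/allP => z /sD'; exact: hw.
  apply: first_sorted hD => // z /sD'; exact: hw.
exists D; split => //; first by rewrite st0_rcons.
move=> q; rewrite st0_cat.
apply: (bottom_keep (Z := w :: D) _ q (s := [::])); last by rewrite st0_rcons eD.
move=> a; exact: sorted_avT1.
Qed.

Lemma final_sub T p q : subseq (res (st0 T p)) (sT T (p ++ q)).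
Proof. rewrite sT_res -/(st0 T (p ++ q)) st0_cat; exact: res_subseq. Qed.

Lemma case_b t1 w t2 b t3 c t4 : uniq (t1 ++ w :: t2 ++ b :: t3 ++ c :: t4) ->
  (forall z, z \in t1 -> w < z) -> w < b -> b < c ->
  has231 (sT T1 (t1 ++ w :: t2 ++ b :: t3 ++ c :: t4)).
Proof.
move=> ux hw wb bc.
case: (setup ux hw) => R [eR sR hq].
set P2 := rcons t1 w ++ (t2 ++ b :: t3).
set P3 := rcons P2 c.
have ex : t1 ++ w :: t2 ++ b :: t3 ++ c :: t4 = P3 ++ t4.
  by rewrite /P3 /P2 cat_rcons -cats1 -!catA.
have uP3 : uniq P3 by move: ux; rewrite ex cat_uniq => /andP [].
case: (hq (t2 ++ b :: t3 ++ [:: c])) => s' es'.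
have e3 : st0 T1 P3 = step T1 (st0 T1 P2) c by rewrite /P3 st0_rcons.
case: (stk_last T1 (st0 T1 P2) c) => D [eD [hD sD]].
have ecD : c :: D = s' ++ w :: R.
  by rewrite -eD -e3 -es' /P3 /P2 -cats1 -!catA.
have cw : c != w by apply/eqP => e; lia.
case: s' es' ecD => [|c' s3] es' ecD; first by case: ecD => e; rewrite e eqxx in cw.
case: ecD => ec eD3; subst c'.
have hav : avoids_all T1 (c :: D) by case: hD => // hD; exfalso; move: (f_equal size eD3); rewrite hD size_cat /=; lia.
rewrite ex.
have bnot : b \notin (st0 T1 P3).1.
  rewrite e3 eD eD3 inE; apply/negP; case/orP => [/eqP e|]; first lia.
  rewrite mem_cat inE; case/orP => [bs3|/orP [/eqP e|bR]]; last 2 first.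
  - lia.
  - apply: (uniq_notboth ux (sR _ bR)); by rewrite inE mem_cat inE eqxx !orbT.
  case/avT1P: hav => _; apply; exists c, b, w; split; last lia.
  rewrite subseq_consE eqxx eD3 -cat1s; apply: cat_subseq; first by rewrite sub1seq.
  by rewrite sub1seq inE eqxx.
have bout : b \in (st0 T1 P3).2.
  have : b \in res (st0 T1 P3).
    rewrite (perm_mem (res_st0_perm T1 P3)) /P3 mem_rcons inE /P2 mem_cat mem_cat inE eqxx.
    by rewrite !orbT.
  rewrite /res mem_cat; case/orP => // h; by rewrite h in bnot.
apply: has231_sub (final_sub _ P3 t4); exists b, c, w; split; last lia.
rewrite /res e3 eD eD3 -e3 -cat1s; apply: cat_subseq; first by rewrite sub1seq.
by rewrite subseq_consE eqxx; apply: subseq_mid; exact: sub0seq.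
Qed.

Lemma push_adj e d D : avoids_all T1 (d :: D) -> uniq (d :: D) -> e \notin D -> d = e.+1 ->
  avoids_all T1 (e :: d :: D).
Proof.
move=> hav /andP [dD _] eD ed; case/avT1P: hav => h1 h2; apply/avT1P; split.
- case=> u [v [t [hs ht]]]; move: hs; rewrite subseq_consE; case: eqP => [eu|ne] hs; last first.
    by apply: h1; exists u, v, t.
  move: hs; rewrite subseq_consE; case: eqP => [ev|nv] hs.
    move: hs; rewrite sub1seq => tD; lia.
  have tD : t \in D by apply: (mem_subseq hs); rewrite !inE eqxx orbT.
  have : ~ (d < t < v) by move=> hh; apply: h1; exists d, v, t; rewrite subseq_consE eqxx.
  have : t != d by apply/eqP => e0; move: dD; rewrite -e0 tD.
  have : t != e by apply/eqP => e0; move: eD; rewrite -e0 tD.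
  move=> /eqP ? /eqP ? ?; lia.
- case=> u [v [t [hs ht]]]; move: hs; rewrite subseq_consE; case: eqP => [eu|ne] hs; last first.
    by apply: h2; exists u, v, t.
  move: hs; rewrite subseq_consE; case: eqP => [ev|nv] hs; first lia.
  have : ~ (t < v < d) by move=> hh; apply: h2; exists d, v, t; rewrite subseq_consE eqxx.
  lia.
Qed.

Lemma case_c t1 w t2 d e t3 : uniq (t1 ++ w :: t2 ++ d :: e :: t3) ->
  (forall z, z \in t1 -> w < z) -> w < e -> d = e.+1 ->
  has231 (sT T1 (t1 ++ w :: t2 ++ d :: e :: t3)).
Proof.
move=> ux hw we de.
case: (setup ux hw) => R [eR sR hq].
set P2 := rcons t1 w ++ t2.
set P3 := rcons P2 d.
set P4 := rcons P3 e.
have ex : t1 ++ w :: t2 ++ d :: e :: t3 = P4 ++ t3.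
  by rewrite /P4 /P3 /P2 !cat_rcons -catA.
have uP4 : uniq P4 by move: ux; rewrite ex cat_uniq => /andP [].
case: (hq (t2 ++ [:: d])) => s' es'.
have e3 : st0 T1 P3 = step T1 (st0 T1 P2) d by rewrite /P3 st0_rcons.
case: (stk_last T1 (st0 T1 P2) d) => D [eD [hD sD]].
have edD : d :: D = s' ++ w :: R.
  by rewrite -eD -e3 -es' /P3 /P2 -cats1 -!catA.
have dw : d != w by apply/eqP => e0; lia.
case: s' es' edD => [|d' s3] es' edD; first by case: edD => e0; rewrite e0 eqxx in dw.
case: edD => ed eD3; subst d'.
have hav : avoids_all T1 (d :: D).
  case: hD => // hD; exfalso; move: (f_equal size eD3); rewrite hD size_cat /=; lia.
have udD : uniq (d :: D) by rewrite -eD -e3; apply: stk_uniq; move: uP4; rewrite /P4 -cats1 cat_uniq => /andP [].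
have enD : e \notin D.
  apply/negP => eD'; have : e \in (st0 T1 P3).1 by rewrite e3 eD inE eD' orbT.
  move/stk_sub => eP3; move: uP4; rewrite /P4 -cats1 cat_uniq => /and3P [_ /negP h _]; apply: h.
  by rewrite /= eP3.
have e4 : (st0 T1 P4).1 = [:: e, d & D].
  rewrite /P4 st0_rcons e3 /step /= eD /=.
  by have := push_adj hav udD enD de; rewrite /avoids_all /= => ->.
rewrite ex; apply: has231_sub (final_sub _ P4 t3); exists e, d, w; split; last lia.
rewrite /res e4 -[[:: e; d; w]]cat0s; apply: cat_subseq; first exact: sub0seq.
rewrite subseq_consE eqxx subseq_consE eqxx eD3 sub1seq mem_cat inE eqxx orbT //.
Qed.

Lemma contains123_231 x : uniq x -> has123 x -> has231 (sT T1 x).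
Proof.
move=> ux [a [b [c [hs habc]]]].
case: (subseq_split hs) => s1 [r1 [ex hs1]].
case: (subseq_split hs1) => s2 [r2 [er1 hs2]].
case: (subseq_split hs2) => s3 [s4 [er2 _]].
have ne : s1 ++ a :: s2 != [::] by case: (s1).
case: (min_split ne) => t1 [w [t2 [epre hw]]].
have ex' : x = t1 ++ w :: (t2 ++ b :: s3 ++ c :: s4).
  by rewrite ex er1 er2 -cat_cons catA epre -catA.
have wa : w <= a by apply: hw; rewrite mem_cat inE eqxx orbT.
rewrite ex'; apply: case_b; rewrite -?ex' //; try lia.
move=> z zt1; have zl : z \in s1 ++ a :: s2 by rewrite epre mem_cat zt1.
have := hw z zl; have : z != w.
  apply/eqP => e; move: ux; rewrite ex' => hu; apply: (uniq_notboth hu zt1); by rewrite e inE eqxx.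
move=> /eqP; lia.
Qed.

Lemma star_231 x : uniq x -> contains_132star x -> has231 (sT T1 x).
Proof.
move=> ux /hasP [b]; rewrite mem_iota => /andP [_ hb] /hasP [i]; rewrite mem_iota => /andP [_ hib].
move=> /andP [hi /eqP hd].
have hb1 : b.+1 < size x by move: hb; case: (size x) => //= n; lia.
set d := nth 0 x b; set e := nth 0 x b.+1.
have ex : x = take b x ++ d :: e :: drop b.+2 x.
  rewrite /d /e -(drop_nth 0) -?(drop_nth 0) ?cat_take_drop //; lia.
have ne : take b x != [::].
  apply/eqP => h; have : size (take b x) = b by rewrite size_takel //; lia.
  rewrite h /=; lia.
case: (min_split ne) => t1 [w [t2 [epre hw]]].
have xi : nth 0 x i \in take b x by rewrite -(nth_take 0 hib) mem_nth // size_takel //; lia.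
have ex' : x = t1 ++ w :: (t2 ++ d :: e :: drop b.+2 x) by rewrite {1}ex epre -catA.
have wi := hw _ xi.
rewrite ex'; apply: case_c; rewrite -?ex' //; try lia.
move=> z zt1; have zl : z \in take b x by rewrite epre mem_cat zt1.
have := hw z zl; have : z != w.
  apply/eqP => e0; move: ux; rewrite ex' => hu; apply: (uniq_notboth hu zt1); by rewrite e0 inE eqxx.
move=> /eqP; lia.
Qed.

Definition big (p : seq nat) z := exists w, subseq [:: w; z] p /\ w < z.
Definition lrmin (p : seq nat) v := v \in p /\ ~ big p v.
Definition gt_rel : rel nat := fun u v => v < u.
Lemma gt_trans : transitive gt_rel.
Proof. move=> ? ? ?; rewrite /gt_rel; lia. Qed.

Definition Good x n := [/\ uniq x, perm_eq x (iota 1 n), ~ has123 x & ~~ contains_132star x].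

Definition Inv (p : seq nat) (st : seq nat * seq nat) := exists opt L,
  [/\ st.1 = opt ++ L,
      (opt = [::] \/ exists p0 l, [/\ opt = [:: l], p = rcons p0 l & big p l]),
      sorted ltn L, {subset L <= p} &
      [/\ (forall v, lrmin p v -> v \in L),
          sorted gt_rel (st.2 ++ opt) &
          (forall z, z \in st.2 ++ opt -> big p z)]].

Lemma big_rcons p a z : big p z -> big (rcons p a) z.
Proof. case=> w [h1 h2]; exists w; split => //; exact: subseq_trans h1 (subseq_rcons _ _). Qed.

Lemma big_in p z : big p z -> z \in p.
Proof. case=> w [h1 _]; apply: (mem_subseq h1); by rewrite !inE eqxx orbT. Qed.

Lemma notin_p (p q : seq nat) a : uniq (p ++ a :: q) -> a \notin p.
Proof. move=> u; apply/negP => ap; apply: (uniq_notboth u ap); by rewrite inE eqxx. Qed.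

Lemma big_gt x p a q z : uniq x -> ~ has123 x -> x = p ++ a :: q -> big p z -> a < z.
Proof.
move=> ux n123 ex bz; have zp := big_in bz; case: bz => w [h1 h2].
have : ~ (z < a).
  move=> za; apply: n123; exists w, z, a; split; last lia.
  rewrite ex -[[:: w; z; a]]/([:: w; z] ++ [:: a]); apply: cat_subseq h1 _.
  by rewrite sub1seq inE eqxx.
have : z != a by apply/eqP => e; have ux' := ux; rewrite ex in ux'; move: (notin_p ux'); rewrite -e zp.
move=> /eqP; lia.
Qed.

Lemma feed_push T a s out : avoids_all T (a :: s) -> feed T a s out = (a :: s, out).
Proof. by case: s => [|b s] /= ->. Qed.

Lemma feed_pop T a b s out : ~~ avoids_all T (a :: b :: s) ->
  feed T a (b :: s) out = feed T a s (rcons out b).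
Proof. by move=> h /=; rewrite (negbTE h). Qed.

Lemma block132 a l q L : q \in L -> a < q < l -> ~~ avoids_all T1 (a :: l :: L).
Proof.
move=> qL h; apply/negP => /avT1P [h1 _]; apply: h1; exists a, l, q; split; last lia.
by rewrite subseq_consE eqxx subseq_consE eqxx sub1seq.
Qed.

Lemma lrmin_rcons p a v : lrmin (rcons p a) v -> v = a \/ lrmin p v.
Proof.
case=> vin nb; move: vin; rewrite mem_rcons inE; case/orP => [/eqP->|vp]; first by left.
right; split => // b; apply: nb; exact: big_rcons.
Qed.

Lemma subseq2_rcons (w v : nat) p0 l : subseq [:: w; v] (rcons p0 l) -> v != l ->
  subseq [:: w; v] p0.
Proof.
move=> h nl; rewrite -subseq_rev; move: h; rewrite -subseq_rev rev_rcons.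
have -> : rev [:: w; v] = [:: v; w] by [].
by rewrite subseq_consE (negbTE nl).
Qed.

Lemma sub_cat3 (p : seq nat) a q w z : subseq [:: w] p -> subseq [:: a; z] (a :: q) ->
  subseq [:: w; a; z] (p ++ a :: q).
Proof. move=> h1 h2; exact: (cat_subseq h1 h2). Qed.

Lemma inv_step x n p a q st : Good x n -> x = p ++ a :: q -> Inv p st ->
  Inv (rcons p a) (step T1 st a).
Proof.
case=> ux px n123 nstar ex [opt [L [est hopt sL subL [lrL sD bD]]]].
have anp : a \notin p by apply: (@notin_p p q); rewrite -ex.
case: st est sD bD => stk out /= est sD bD.
rewrite /step /= est.
have hL : forall b, avoids_all T1 (b :: L) by move=> b; exact: sorted_avT1.
have subL' : {subset L <= rcons p a} by move=> z /subL zp; rewrite mem_rcons inE zp orbT.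
case Ha: (has (fun w => w < a) p).
-
  have ba : big (rcons p a) a.
    case/hasP: Ha => w wp wa; exists w; split => //.
    rewrite -cats1 -[[:: w; a]]/([:: w] ++ [:: a]); apply: cat_subseq; by rewrite ?sub1seq ?inE ?eqxx.
  have lrL' : forall v, lrmin (rcons p a) v -> v \in L.
    move=> v hv; case: (lrmin_rcons hv) => [ev|]; last exact: lrL.
    by case: hv => _ []; rewrite ev.
  have decr : forall z, z \in out ++ opt -> a < z.
    move=> z /bD; exact: big_gt ux n123 ex.
  have bigs : forall z, z \in (out ++ opt) ++ [:: a] -> big (rcons p a) z.
    move=> z; rewrite mem_cat inE; case/orP => [/bD|/eqP ->] //; exact: big_rcons.
  have sD' : sorted gt_rel ((out ++ opt) ++ [:: a]).
    rewrite cats1; apply: (sorted_rconsR gt_trans) => // z; exact: decr.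
  case: hopt => [eo|[p0 [l [eo ep bl]]]]; subst opt.
  +
    rewrite /= feed_push //; exists [:: a], L; split => //.
      right; by exists p, a.
    split => //; by rewrite cats0 in sD' bigs *.
  +
    have al : a < l by apply: decr; rewrite mem_cat inE eqxx orbT.
    have lna : l != a.+1.
      apply/negP => /eqP la; move/negP: nstar; apply.
      case/hasP: Ha => w wp wa.
      have wp0 : w \in p0 by move: wp; rewrite ep mem_rcons inE; case/orP => // /eqP e; lia.
      have ex2 : x = p0 ++ [:: l, a & q] by rewrite ex ep cat_rcons.
      apply/hasP; exists (size p0).
        rewrite mem_iota ex2 size_cat /=; lia.
      apply/hasP; exists (index w p0).
        by rewrite mem_iota /= index_mem wp0.
      rewrite ex2 nth_cat index_mem wp0 nth_index //.
      have h0 : ((size p0).+1 < size p0) = false by lia.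
      rewrite !nth_cat ltnn subnn h0 subSnn /= wa la eqxx //.
    set v := a.+1.
    have vl : v < l by rewrite /v; move: lna al; move=> /eqP; lia.
    have vx : v \in x.
      have lx : l \in x by rewrite ex mem_cat ep mem_rcons inE eqxx.
      rewrite (perm_mem px) mem_iota; move: lx; rewrite (perm_mem px) mem_iota => /andP [_ ln]; move: vl; rewrite /v => vl; apply/andP; split; lia.
    case/hasP: Ha => wa wap waa.
    have vp : v \in p.
      move: vx; rewrite ex mem_cat inE; case/orP => [//|/orP [/eqP e|vq]]; first by rewrite /v in e; lia.
      exfalso; apply: n123; exists wa, a, v; split; last by rewrite /v; lia.
      rewrite ex; apply: sub_cat3; first by rewrite sub1seq.
      by rewrite subseq_consE eqxx sub1seq.
    have vL : v \in L.
      apply: lrL; split => // [[w' [h1 h2]]]; apply: n123; exists w', v, l; split; last lia.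
      rewrite ex ep; apply: subseq_trans (prefix_subseq _ (a :: q)).
      rewrite -cats1 -[[:: w'; v; l]]/([:: w'; v] ++ [:: l]); apply: cat_subseq.
        apply: (subseq2_rcons (l := l)); first by rewrite -ep.
        by apply/eqP => e; lia.
      by rewrite sub1seq inE eqxx.
    rewrite cat1s feed_pop; last by apply: (block132 vL); rewrite /v; lia.
    rewrite feed_push //; exists [:: a], L; split => //=.
      right; by exists p, a.
    split => //; rewrite cat_rcons; by rewrite -catA in sD' bigs.
-
  have alt : forall z, z \in p -> a < z.
    move=> z zp; have : ~~ (z < a) by apply/negP => za; move/negP: Ha; apply; apply/hasP; exists z.
    have : z != a by apply/eqP => e; move: anp; rewrite -e zp.
    move=> /eqP; lia.
  have sL' : sorted ltn (a :: L).
    rewrite /= (path_sortedE ltn_trans) sL andbT; apply/allP => z /subL; exact: alt.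
  have lrL' : forall v, lrmin (rcons p a) v -> v \in a :: L.
    move=> v /lrmin_rcons [->|/lrL vL]; by rewrite inE ?eqxx ?vL ?orbT.
  have subL2 : {subset a :: L <= rcons p a}.
    move=> z; rewrite inE; case/orP => [/eqP ->|/subL' //]; by rewrite mem_rcons inE eqxx.
  have bigs : forall z, z \in out ++ opt -> big (rcons p a) z by move=> z /bD; exact: big_rcons.
  case: hopt => [eo|[p0 [l [eo ep bl]]]]; subst opt.
  + rewrite /= feed_push //; exists [::], (a :: L); split => //; left => //.
  + have pne : p != [::] by rewrite ep; case: (p0).
    case: (min_split pne) => t1 [m [t2 [ep2 hm]]].
    have mp : m \in p by rewrite ep2 mem_cat inE eqxx orbT.
    have mL : m \in L.
      apply: lrL; split => // [[w [h1 h2]]].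
      have : w \in p by apply: (mem_subseq h1); rewrite inE eqxx.
      move/hm; lia.
    have ml : m < l.
      case: bl => w [h1 h2]; have : w \in p by apply: (mem_subseq h1); rewrite inE eqxx.
      move/hm; lia.
    rewrite cat1s feed_pop; last by apply: (block132 mL); rewrite alt.
    rewrite feed_push //; exists [::], (a :: L); split => //=; first by left.
    split => //; rewrite cats0 -cats1 //.
Qed.

Lemma inv_all x n : Good x n -> forall p q, x = p ++ q -> Inv p (st0 T1 p).
Proof.
move=> G; elim/last_ind => [|p a IH] q ex.
  exists [::], [::]; split => //=; first by left.
  by split => // v [].
rewrite st0_rcons; apply: (inv_step G (q := q)); first by rewrite ex cat_rcons.
apply: (IH (a :: q)); by rewrite ex cat_rcons.
Qed.

Lemma subseq_catsplit (s D I : seq nat) : subseq s (D ++ I) ->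
  exists s1 s2, [/\ s = s1 ++ s2, subseq s1 D & subseq s2 I].
Proof.
elim: D s => [|d D IH] s.
  move=> h; by exists [::], s; split; rewrite ?sub0seq.
case: s => [|u s] h; first by exists [::], [::]; split; rewrite ?sub0seq.
move: h; rewrite cat_cons subseq_consE; case: eqP => [eu|ne] h.
  case: (IH _ h) => s1 [s2 [-> h1 h2]]; exists (u :: s1), s2; split => //.
  by rewrite subseq_consE eu eqxx.
case: (IH _ h) => s1 [s2 [e h1 h2]]; exists s1, s2; split => //.
exact: subseq_trans h1 (subseq_cons _ _).
Qed.

Lemma dec_inc_no231 D I : sorted gt_rel D -> sorted ltn I -> ~ has231 (D ++ I).
Proof.
move=> sD sI [u [v [w [hs hw]]]].
case: (subseq_catsplit hs) => s1 [s2 [e h1 h2]].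
have sD1 := subseq_sorted gt_trans h1 sD.
have sI2 := subseq_sorted ltn_trans h2 sI.
case: s1 e h1 sD1 => [|u1 [|v1 [|w1 [|z1 s1]]]] /= e h1 sD1.
- rewrite -e in sI2; move: sI2 => /= /andP [uv /andP [vw _]]; lia.
- case: e => eu es2; rewrite -es2 in sI2; move: sI2 => /= /andP [vw _]; lia.
- case: e => eu ev es2; move: sD1 => /= /andP [vu _]; rewrite /gt_rel in vu; lia.
- case: e => eu ev ew es2; move: sD1 => /= /andP [vu _]; rewrite /gt_rel in vu; lia.
- by case: e.
Qed.

Lemma dir_a x n : Good x n -> ~ has231 (sT T1 x).
Proof.
move=> G; have := inv_all G (q := [::]) (esym (cats0 x)).
case=> opt [L [est _ sL _ [_ sD _]]].
rewrite sT_res -/(st0 T1 x) /res est catA; exact: dec_inc_no231.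
Qed.

Lemma sT_perm T x : perm_eq (sT T x) x.
Proof. rewrite sT_res; exact: res_st0_perm. Qed.

Theorem theorem3p7 (n : nat) (x : seq nat) :
  in_Sort_132_321 n x = in_Av_123_132star n x.
Proof.
rewrite /in_Sort_132_321 /in_Av_123_132star.
case px: (is_perm n x) => //=.
have ux : uniq x by rewrite (perm_uniq px) iota_uniq.
change (sT [:: [:: 1; 3; 2]; [:: 3; 2; 1]] x) with (sT T1 x).
rewrite /west; change (sT [:: [:: 2; 1]] (sT T1 x)) with (sT T2 (sT T1 x)).
have uy : uniq (sT T1 x) by rewrite (perm_uniq (sT_perm T1 x)).
apply/idP/idP.
- move=> /eqP hw; apply/andP; split.
  + apply/negP => /c123 h; apply: (knuth2 uy (contains123_231 ux h)).
    rewrite hw; exact: iota_ltn_sorted.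
  + apply/negP => h; apply: (knuth2 uy (star_231 ux h)).
    rewrite hw; exact: iota_ltn_sorted.
- case/andP => av ns.
  have G : Good x n.
    split => // h; move/negP: av; apply; exact/c123.
  have hs := knuth1 uy (dir_a G).
  apply/eqP; apply: (irr_sorted_eq ltn_trans ltnn hs (iota_ltn_sorted 1 n)).
  apply: perm_mem; apply: perm_trans (sT_perm _ _) _; apply: perm_trans (sT_perm _ _) _.
  exact: px.
Qed.
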